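(* For every $n\ge1$, every $f\colon\mathbb F_2^n\to\mathbb R$, every $\epsilon> 0$ and every $\delta\in(0,1/2]$ such that $\xi:=\|f\|_2^2-\epsilon(1+2\delta)>0$, it holds that $\mathcal D^{\to,U}_{\epsilon}(f^+)\ge \frac{\delta}{2}\cdot\dim_{\xi}(f)$.
   Context: Fourier analysis: for $\alpha\in\mathbb F_2^n$ let $\chi_\alpha(x)=(-1)^{\sum_i\alpha_i x_i}$; $\hat f(\alpha)=\mathbb E_{x\sim U(\mathbb F_2^n)}[f(x)\chi_\alpha(x)]$; $\|f\|_2^2=\mathbb E_x[f(x)^2]$. Approximate Fourier dimension: for $\xi\in(0,\|f\|_2^2]$, $\dim_\xi(f)$ is the minimum $k$ such that there exists a linear subspace $A\subseteq\mathbb F_2^n$ of dimension $k$ with $\sum_{\alpha\in A}\hat f(\alpha)^2\ge\xi$. The XOR-function of $f$ is $f^+(x,y)=f(x+y)$ for $x,y\in\mathbb F_2^n$ (addition mod 2). Distributional one-way communication complexity under the uniform distribution: $\mathcal D^{\to,U}_\epsilon(f^+)$ is the minimum, over deterministic one-way protocols $\Pi$ in which Alice (holding $x$) sends a single message $M(x)$ to Bob (holding $y$) who then outputs a real number $\Pi(x,y)$ depending only on $M(x)$ and $y$, satisfying $\mathbb E_{x,y\sim U(\mathbb F_2^n)}[(\Pi(x,y)-f^+(x,y))^2]\le\epsilon$, of the maximum length in bits of Alice's message. *)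

(* Defs.v *)
From HB Require Import structures.
From mathcomp Require Import all_boot all_order all_algebra.
From Stdlib Require Import Reals.

Set Implicit Arguments.
Unset Strict Implicit.
Unset Printing Implicit Defensive.
Local Open Scope R_scope.

Definition F2n (n : nat) := 'rV['F_2]_n.

Definition rsum (T : finType) (P : pred T) (g : T -> R) : R :=
  \big[Rplus/0]_(x : T | P x) g x.

Definition Ex (n : nat) (g : F2n n -> R) : R :=
  rsum predT g / 2 ^ n.

Definition ip (n : nat) (a x : F2n n) : 'F_2 :=
  \big[GRing.add/GRing.zero]_(i < n) GRing.mul (a ord0 i) (x ord0 i).

Definition chi (n : nat) (a : F2n n) (x : F2n n) : R :=
  if ip a x == GRing.zero then 1 else -1.

Definition fhat (n : nat) (f : F2n n -> R) (a : F2n n) : R :=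
  Ex (fun x => (f x * chi a x)).

Definition norm2sq (n : nat) (f : F2n n -> R) : R :=
  Ex (fun x => (f x * f x)).

Definition fweight (n : nat) (f : F2n n -> R) (A : {vspace F2n n}) : R :=
  rsum (fun a => a \in A) (fun a => (fhat f a * fhat f a)).

Definition is_approx_fdim (n : nat) (f : F2n n -> R) (xi : R) (k : nat) : Prop :=
  (exists A : {vspace F2n n}, \dim A = k /\ (xi <= fweight f A)) /\
  (forall A : {vspace F2n n}, (xi <= fweight f A) -> leq k (\dim A)).

Definition xorf (n : nat) (f : F2n n -> R) (x y : F2n n) : R := f (GRing.add x y).

(* A deterministic one-way protocol: Alice sends the bit string M x,
   Bob outputs B (M x) y. *)
Definition cost (n : nat) (M : F2n n -> seq bool) : nat :=
  \max_(x : F2n n) size (M x).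

Definition proto_err (n : nat) (f : F2n n -> R)
    (M : F2n n -> seq bool) (B : seq bool -> F2n n -> R) : R :=
  Ex (fun x => Ex (fun y => ((B (M x) y - xorf f x y) ^ 2))).

Definition is_D1wayU (n : nat) (f : F2n n -> R) (eps : R) (d : nat) : Prop :=
  (exists (M : F2n n -> seq bool) (B : seq bool -> F2n n -> R),
      cost M = d /\ (proto_err f M B <= eps)) /\
  (forall (M : F2n n -> seq bool) (B : seq bool -> F2n n -> R),
      (proto_err f M B <= eps) -> leq d (cost M)).

(* Main.v *)
Require Import Defs.
From HB Require Import structures.
From mathcomp Require Import all_boot all_order all_algebra.
From Stdlib Require Import Reals Lra Psatz Factorial.
From Coquelicot Require Coquelicot.
Set Implicit Arguments.
Unset Strict Implicit.
Unset Printing Implicit Defensive.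
Local Open Scope R_scope.
HB.instance Definition _ := Monoid.isComLaw.Build R 0 Rplus (fun a b c => esym (Rplus_assoc a b c)) Rplus_comm Rplus_0_l.

Module CoshB.
Import Coquelicot.Coquelicot.
Open Scope R_scope.

Lemma fact_bound (k : nat) : 2 ^ k * INR (Factorial.fact k) <= INR (Factorial.fact (Nat.mul 2 k)).
Proof.
induction k as [|k IH]; first by simpl; lra.
replace (Nat.mul 2 (S k)) with (S (S (Nat.mul 2 k))) by lia.
rewrite !fact_simpl !mult_INR !S_INR [2 ^ S k]/=.
have h1 := pos_INR k.
have h2 := pos_INR (Nat.mul 2 k).
have h3 : INR (Nat.mul 2 k) = 2 * INR k by rewrite mult_INR.
have h4 : 0 <= 2 ^ k * INR (Factorial.fact k).
  apply: Rmult_le_pos; [apply: pow_le; lra | apply: pos_INR].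
nra.
Qed.

Lemma cosh_le (x : R) : (exp x + exp (- x)) / 2 <= exp (x * x / 2).
Proof.
set a := fun n : nat => / INR (Factorial.fact n).
set b := fun n : nat => (x * x / 2) ^ n / INR (Factorial.fact n).
set ce := fun n : nat => (x * x) ^ n / INR (Factorial.fact (Nat.mul 2 n)).
set co := fun n : nat => (x * x) ^ n / INR (Factorial.fact (Nat.add (Nat.mul 2 n) 1)).
have Hb : is_series b (exp (x * x / 2)).
  have H := is_exp_Reals (x * x / 2).
  apply: is_series_ext H => k. rewrite pow_n_pow /b /scal /= /mult /=. reflexivity.
have xx0 : 0 <= x * x by nra.
have powdiv : forall k, (x * x / 2) ^ k = (x * x) ^ k * / (2 ^ k).
  move=> k; rewrite /Rdiv Rpow_mult_distr pow_inv //.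
have Hce : forall k, 0 <= ce k <= b k.
  move=> k; rewrite /ce /b powdiv /Rdiv.
  have p1 : 0 <= (x * x) ^ k by apply: pow_le.
  have p2 : 0 < 2 ^ k by apply: pow_lt; lra.
  have p3 : 0 < INR (fact k) by apply: lt_0_INR; apply: lt_O_fact.
  have p4 : 0 < INR (fact (Nat.mul 2 k)) by apply: lt_0_INR; apply: lt_O_fact.
  have fb := fact_bound k.
  split; first by apply: Rmult_le_pos => //; apply: Rlt_le; apply: Rinv_0_lt_compat.
  rewrite Rmult_assoc; apply: Rmult_le_compat_l => //.
  rewrite -Rinv_mult; apply: Rinv_le_contravar => //; nra.
have Hco : forall k, 0 <= co k <= b k.
  move=> k; have [h1 h2] := Hce k; split.
    rewrite /co /Rdiv; apply: Rmult_le_pos; first by apply: pow_le.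
    by apply: Rlt_le; apply: Rinv_0_lt_compat; apply: lt_0_INR; apply: lt_O_fact.
  apply: Rle_trans h2; rewrite /co /ce /Rdiv; apply: Rmult_le_compat_l; first by apply: pow_le.
  have p4 : 0 < INR (fact (Nat.mul 2 k)) by apply: lt_0_INR; apply: lt_O_fact.
  apply: Rinv_le_contravar => //.
  replace (Nat.add (Nat.mul 2 k) 1) with (S (Nat.mul 2 k)) by lia.
  rewrite fact_simpl mult_INR S_INR; have := pos_INR (Nat.mul 2 k); nra.
have exb : ex_series b by exists (exp (x * x / 2)).
have exce : ex_series ce.
  apply: (ex_series_le ce b) => // k; rewrite /norm /= /abs /= Rabs_pos_eq; have := Hce k; lra.
have exco : ex_series co.
  apply: (ex_series_le co b) => // k; rewrite /norm /= /abs /= Rabs_pos_eq; have := Hco k; lra.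
have Pe : forall y, y * y = x * x -> is_pseries (fun n => a (Nat.mul 2 n)) (y ^ 2) (Series ce).
  move=> y yy; apply: (is_series_ext ce); last by apply: Series_correct.
  move=> k; rewrite pow_n_pow /ce /scal /= /mult /= /a Rmult_1_r yy; reflexivity.
have Po : forall y, y * y = x * x -> is_pseries (fun n => a (Nat.add (Nat.mul 2 n) 1)) (y ^ 2) (Series co).
  move=> y yy; apply: (is_series_ext co); last by apply: Series_correct.
  move=> k; rewrite pow_n_pow /co /scal /= /mult /= /a Rmult_1_r yy; reflexivity.
have E1 : exp x = Series ce + x * Series co.
  have H := is_pseries_odd_even a x _ _ (Pe x erefl) (Po x erefl).
  have H2 := is_exp_Reals x.
  by rewrite -(is_pseries_unique _ _ _ H) -(is_pseries_unique _ _ _ H2).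
have E2 : exp (- x) = Series ce + (- x) * Series co.
  have yy : - x * - x = x * x by ring.
  have H := is_pseries_odd_even a (- x) _ _ (Pe _ yy) (Po _ yy).
  have H2 := is_exp_Reals (- x).
  by rewrite -(is_pseries_unique _ _ _ H) -(is_pseries_unique _ _ _ H2).
have L : Series ce <= Series b by apply: Series_le.
rewrite (is_series_unique _ _ Hb) in L.
rewrite E1 E2; lra.
Qed.
End CoshB.


Lemma rsum_mulr (I:Type) (r:seq I) (P : pred I) F c :
  \big[Rplus/0]_(i <- r | P i) F i * c = \big[Rplus/0]_(i <- r | P i) (F i * c).
Proof.
apply: (big_rec2 (fun a b => a * c = b)); first lra.
by move=> i a b _ <-; lra.
Qed.

Lemma rsum_const (T : finType) (P : pred T) c :
  \big[Rplus/0]_(x | P x) c = INR #|P| * c.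
Proof.
rewrite big_const; elim: #|P| => [|m IH] /=; first lra.
rewrite IH; case: m {IH} => [|m] /=; lra.
Qed.

Definition sgn2 (z : 'F_2) : R := if z == GRing.zero then 1 else -1.

Lemma sgn2D z1 z2 : sgn2 (GRing.add z1 z2) = sgn2 z1 * sgn2 z2.
Proof. rewrite /sgn2; case: z1 => [[|[|m]] Hm]; case: z2 => [[|[|m']] Hm'] //=; lra. Qed.

Lemma sgn2_pm z : sgn2 z = 1 \/ sgn2 z = -1.
Proof. rewrite /sgn2; case: ifP; auto. Qed.

Lemma sgn2_sq z : sgn2 z * sgn2 z = 1.
Proof. case: (sgn2_pm z) => ->; lra. Qed.

Section Chars.
Variable n : nat.
Implicit Types a b x y : F2n n.

Lemma chiE a x : chi a x = sgn2 (ip a x).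
Proof. by []. Qed.

Lemma ipDr a x y : ip a (GRing.add x y) = GRing.add (ip a x) (ip a y).
Proof.
rewrite /ip -big_split /=; apply: eq_bigr => i _.
by rewrite mxE GRing.mulrDr.
Qed.

Lemma ipC a x : ip a x = ip x a.
Proof. by rewrite /ip; apply: eq_bigr => i _; rewrite GRing.mulrC. Qed.

Lemma chiD a x y : chi a (GRing.add x y) = chi a x * chi a y.
Proof. by rewrite !chiE ipDr sgn2D. Qed.

Lemma chiC a x : chi a x = chi x a.
Proof. by rewrite !chiE ipC. Qed.

Lemma chiDl a b x : chi (GRing.add a b) x = chi a x * chi b x.
Proof. by rewrite chiC chiD -!(chiC x). Qed.

Lemma chi_sq a x : chi a x * chi a x = 1.
Proof. by rewrite chiE sgn2_sq. Qed.

Lemma chi_pm a x : chi a x = 1 \/ chi a x = -1.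
Proof. by rewrite chiE; apply: sgn2_pm. Qed.

Lemma chi0 x : chi (GRing.zero) x = 1.
Proof.
rewrite chiE /sgn2 /ip big1 ?eqxx // => i _.
by rewrite mxE GRing.mul0r.
Qed.

Lemma card_F2n : INR #|{: F2n n}| = 2 ^ n.
Proof.
rewrite /F2n card_mx card_Fp // mul1n.
elim: n => [|m IH] //=; rewrite expnS mult_INR IH /=; lra.
Qed.



Lemma chi_sum a :
  \big[Rplus/0]_(x : F2n n) chi a x = if a == GRing.zero then 2 ^ n else 0.
Proof.
case: eqP => [->|/eqP na].
  under eq_bigr do rewrite chi0.
  by rewrite rsum_const card_F2n Rmult_1_r.
have [i ai] : exists i, a ord0 i != GRing.zero.
  apply/existsP; apply: contraR na => /existsPn H.
  apply/eqP/rowP => j; rewrite mxE; have := H j; by rewrite negbK => /eqP.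
set e := delta_mx ord0 i : F2n n.
have che : chi a e = -1.
  rewrite chiE /sgn2 /ip (bigD1 i) //= big1 ?GRing.addr0.
    by rewrite mxE !eqxx GRing.mulr1 (negbTE ai).
  by move=> j /negbTE nj; rewrite mxE nj andbF GRing.mulr0.
have H : \big[Rplus/0]_(x : F2n n) chi a x = \big[Rplus/0]_(x : F2n n) chi a (GRing.add x e).
  exact: (reindex_inj (GRing.addIr e)).
move: H; under [in X in _ = X -> _]eq_bigr do rewrite chiD che.
rewrite -rsum_mulr => H.
have L : forall r : R, r = r * -1 -> r = 0 by move=> r; lra.
exact: (L _ H).
Qed.

Lemma addxx x : GRing.add x x = GRing.zero.
Proof.
apply/rowP => i; rewrite !mxE.
by case: (x ord0 i) => [[|[|m]] Hm]; apply/val_inj.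
Qed.

Lemma addxxK x y : GRing.add x (GRing.add x y) = y.
Proof. by rewrite GRing.addrA addxx GRing.add0r. Qed.

Lemma chi_orth y z :
  \big[Rplus/0]_(a : F2n n) (chi a y * chi a z) = if y == z then 2 ^ n else 0.
Proof.
under eq_bigr do rewrite !(chiC _ y) !(chiC _ z) -chiDl.
rewrite chi_sum; congr (if _ then _ else _).
apply/eqP/eqP => [H|->]; last exact: addxx.
by rewrite -(addxxK y z) H GRing.addr0.
Qed.

End Chars.

Lemma rsum_mull (I:Type) (r:seq I) (P : pred I) F c :
  c * \big[Rplus/0]_(i <- r | P i) F i = \big[Rplus/0]_(i <- r | P i) (c * F i).
Proof.
apply: (big_rec2 (fun a b => c * a = b)); first lra.
by move=> i a b _ <-; lra.
Qed.

Lemma rsum_distr (I J:Type) (r:seq I) (s : seq J) (P : pred I) (P' : pred J) F G :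
  (\big[Rplus/0]_(i <- r | P i) F i) * (\big[Rplus/0]_(j <- s | P' j) G j) =
  \big[Rplus/0]_(i <- r | P i) \big[Rplus/0]_(j <- s | P' j) (F i * G j).
Proof.
rewrite rsum_mulr; apply: eq_bigr => i _; rewrite rsum_mull //.
Qed.

Lemma rsum_le (I:Type) (r:seq I) (P : pred I) F G :
  (forall i, P i -> F i <= G i) ->
  \big[Rplus/0]_(i <- r | P i) F i <= \big[Rplus/0]_(i <- r | P i) G i.
Proof.
move=> H; apply: (big_rec2 (fun a b => a <= b)); first lra.
move=> i a b Pi ab; have := H i Pi; lra.
Qed.

Lemma rsum_ge0 (I:Type) (r:seq I) (P : pred I) F :
  (forall i, P i -> 0 <= F i) -> 0 <= \big[Rplus/0]_(i <- r | P i) F i.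
Proof.
move=> H; apply: (big_rec (fun a => 0 <= a)); first lra.
move=> i a Pi ab; have := H i Pi; lra.
Qed.

Lemma rsum_opp (I:Type) (r:seq I) (P : pred I) F :
  \big[Rplus/0]_(i <- r | P i) (- F i) = - \big[Rplus/0]_(i <- r | P i) F i.
Proof.
apply: esym; apply: (big_rec2 (fun a b => - a = b)); first lra.
by move=> i a b _ <-; lra.
Qed.

Lemma rsum_sub (I:Type) (r:seq I) (P : pred I) F G :
  \big[Rplus/0]_(i <- r | P i) (F i - G i) =
  \big[Rplus/0]_(i <- r | P i) F i - \big[Rplus/0]_(i <- r | P i) G i.
Proof. by rewrite /Rminus big_split rsum_opp. Qed.

Section Fourier.
Variable n : nat.
Implicit Types a b x y : F2n n.
Local Notation Q := (2 ^ n).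

Lemma Q_pos : 0 < Q.
Proof. apply: pow_lt; lra. Qed.

Lemma ExE (g : F2n n -> R) : Ex g = \big[Rplus/0]_(x : F2n n) g x / Q.
Proof. by []. Qed.

Lemma fhatE h a : fhat h a = \big[Rplus/0]_(y : F2n n) (h y * chi a y) / Q.
Proof. by []. Qed.

Lemma parseval h :
  \big[Rplus/0]_(a : F2n n) (fhat h a * fhat h a) = Ex (fun x => h x * h x).
Proof.
have QP := Q_pos.
under eq_bigr do rewrite fhatE.
transitivity (\big[Rplus/0]_(a : F2n n)
  ((\big[Rplus/0]_(y : F2n n) (h y * chi a y)) *
   (\big[Rplus/0]_(y : F2n n) (h y * chi a y))) / (Q * Q)).
  rewrite /Rdiv rsum_mulr; apply: eq_bigr => a _; field; lra.
under eq_bigr do rewrite rsum_distr.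
rewrite exchange_big /=.
under eq_bigr do rewrite exchange_big /=.
transitivity (\big[Rplus/0]_(y : F2n n) \big[Rplus/0]_(z : F2n n)
   (h y * h z * (if y == z then Q else 0)) / (Q * Q)).
  congr (_ / _); apply: eq_bigr => y _; apply: eq_bigr => z _.
  rewrite -chi_orth rsum_mull; apply: eq_bigr => a _; lra.
have inner : forall y, \big[Rplus/0]_(z : F2n n) (h y * h z * (if y == z then Q else 0))
   = h y * h y * Q.
  move=> y; rewrite (bigD1 y) //= eqxx big1 => [|z /negbTE nz]; first lra.
  by rewrite eq_sym nz; lra.
under eq_bigr do rewrite inner.
rewrite ExE /Rdiv !rsum_mulr; apply: eq_bigr => y _; field; lra.
Qed.

End Fourier.

Section Grouping.
Variable T : finType.
Variable M : T -> seq bool.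

Definition cnt (x : T) : nat := #|[pred y | M y == M x]|.
Definition avg (phi : T -> R) (x : T) : R :=
  \big[Rplus/0]_(y | M y == M x) phi y / INR (cnt x).

Lemma cnt_pos x : leq 1 (cnt x).
Proof. by apply/card_gt0P; exists x; rewrite inE. Qed.

Lemma cnt_posR x : 0 < INR (cnt x).
Proof. apply: lt_0_INR; apply/ltP; exact: cnt_pos. Qed.

Lemma cnt_eq x y : M x = M y -> cnt x = cnt y.
Proof. by rewrite /cnt => ->. Qed.

Lemma avg_eq phi x y : M x = M y -> avg phi x = avg phi y.
Proof. by move=> E; rewrite /avg (cnt_eq E) E. Qed.

Lemma grouping (h phi : T -> R) :
  (forall x y, M x = M y -> h x = h y) ->
  \big[Rplus/0]_(x : T) (h x * avg phi x) = \big[Rplus/0]_(x : T) (h x * phi x).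
Proof.
move=> hM.
transitivity (\big[Rplus/0]_(x : T) \big[Rplus/0]_(y : T)
   (if M y == M x then h x * phi y / INR (cnt x) else 0)).
  apply: eq_bigr => x _; rewrite /avg /Rdiv rsum_mulr rsum_mull.
  rewrite big_mkcond /=; apply: eq_bigr => y _; case: ifP => _; lra.
rewrite exchange_big /=; apply: eq_bigr => y _.
transitivity (\big[Rplus/0]_(x | M x == M y) (h y * phi y / INR (cnt y))).
  rewrite [in RHS]big_mkcond /=; apply: eq_bigr => x _.
  case: eqP => [E|NE]; case: eqP => E' //.
  - by rewrite (hM _ _ E') (cnt_eq E').
  - by case: E'.
  - by case: NE.
rewrite rsum_const (_ : #|_| = cnt y); last by apply: eq_card => x; rewrite inE.
have := cnt_posR y => P; field; lra.
Qed.

Lemma variance (h phi : T -> R) :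
  (forall x y, M x = M y -> h x = h y) ->
  \big[Rplus/0]_(x : T) (phi x * phi x) - \big[Rplus/0]_(x : T) (avg phi x * avg phi x)
  <= \big[Rplus/0]_(x : T) ((h x - phi x) * (h x - phi x)).
Proof.
move=> hM; have G := grouping phi hM.
have E : \big[Rplus/0]_(x : T) ((h x - phi x) * (h x - phi x)) =
  \big[Rplus/0]_(x : T) ((h x - avg phi x) * (h x - avg phi x))
  + (\big[Rplus/0]_(x : T) (phi x * phi x) - \big[Rplus/0]_(x : T) (avg phi x * avg phi x))
  + 2 * (\big[Rplus/0]_(x : T) (h x * avg phi x) - \big[Rplus/0]_(x : T) (h x * phi x)).
  rewrite -!rsum_sub rsum_mull -!big_split /=; apply: eq_bigr => x _; ring.
rewrite E G; have : 0 <= \big[Rplus/0]_(x : T) ((h x - avg phi x) * (h x - avg phi x)).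
  by apply: rsum_ge0 => x _; apply: Rle_0_sqr.
lra.
Qed.

Lemma avg_scal c phi x : avg (fun y => c * phi y) x = c * avg phi x.
Proof. by rewrite /avg -rsum_mull /Rdiv Rmult_assoc. Qed.

Lemma avg_bound phi x : (forall y, -1 <= phi y <= 1) -> -1 <= avg phi x <= 1.
Proof.
move=> H; have P := cnt_posR x; rewrite /avg.
have U : \big[Rplus/0]_(y | M y == M x) phi y <= INR (cnt x).
  rewrite /cnt -[X in _ <= X]Rmult_1_r -rsum_const; apply: rsum_le => y _; have := H y; lra.
have L : - INR (cnt x) <= \big[Rplus/0]_(y | M y == M x) phi y.
  rewrite /cnt (_ : - INR _ = INR #|[pred y | M y == M x]| * -1); last by ring.
  rewrite -rsum_const; apply: rsum_le => y _; have := H y; lra.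
move: U L P; set S := bigop _ _ _; set c := INR _ => U L P.
have E : S = (S / c) * c by field; lra.
move: (S / c) E => t E; split; nra.
Qed.

End Grouping.

Section ErrBound.
Variable n : nat.
Local Notation Q := (2 ^ n).
Implicit Types a x y : F2n n.

Lemma rsum_reindex_add (F : F2n n -> R) x :
  \big[Rplus/0]_(y : F2n n) F y = \big[Rplus/0]_(y : F2n n) F (GRing.add x y).
Proof. exact: (reindex_inj (GRing.addrI x)). Qed.

Lemma fhat_shift (f : F2n n -> R) x a :
  fhat (fun y => f (GRing.add x y)) a = fhat f a * chi a x.
Proof.
rewrite !fhatE [in RHS](rsum_reindex_add _ x) /Rdiv.
have -> : \big[Rplus/0]_(y : F2n n) (f (GRing.add x y) * chi a y) =
   \big[Rplus/0]_(y : F2n n) (f (GRing.add x y) * chi a (GRing.add x y)) * chi a x.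
  rewrite rsum_mulr; apply: eq_bigr => y _; rewrite chiD.
  have H := chi_sq a x.
  transitivity (f (GRing.add x y) * chi a y * (chi a x * chi a x)); [rewrite H | ]; ring.
ring.
Qed.

Lemma fhat_sub (g h : F2n n -> R) a :
  fhat (fun y => g y - h y) a = fhat g a - fhat h a.
Proof.
rewrite !fhatE /Rdiv -Rmult_minus_distr_r -rsum_sub; congr (_ * _).
by apply: eq_bigr => y _; ring.
Qed.

Definition W (M : F2n n -> seq bool) a : R :=
  \big[Rplus/0]_(x : F2n n) (avg M (chi a) x * avg M (chi a) x) / Q.

Lemma err_bound (f : F2n n -> R) M (B : seq bool -> F2n n -> R) :
  \big[Rplus/0]_(a : F2n n) (fhat f a * fhat f a * (1 - W M a)) <= proto_err f M B.
Proof.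
have QP := Q_pos n.
rewrite /proto_err ExE.
have E : forall x, Ex (fun y => (B (M x) y - xorf f x y) ^ 2) =
  \big[Rplus/0]_(a : F2n n) ((fhat (B (M x)) a - fhat f a * chi a x) *
                            (fhat (B (M x)) a - fhat f a * chi a x)).
  move=> x.
  rewrite (_ : Ex _ = Ex (fun y => (B (M x) y - f (GRing.add x y)) * (B (M x) y - f (GRing.add x y)))); last first.
    by rewrite !ExE; congr (_ / _); apply: eq_bigr => y _; rewrite /xorf; ring.
  rewrite -parseval; apply: eq_bigr => a _.
  by rewrite fhat_sub fhat_shift.
under [in X in _ <= X]eq_bigr do rewrite E.
rewrite exchange_big /= /Rdiv rsum_mulr; apply: rsum_le => a _.
set c := fhat f a.
have hM : forall x y, M x = M y -> fhat (B (M x)) a = fhat (B (M y)) a by move=> x y ->.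
have V := variance (fun x => c * chi a x) hM.
have E1 : \big[Rplus/0]_(x : F2n n) (c * chi a x * (c * chi a x)) = c * c * Q.
  rewrite (_ : c * c * Q = INR #|{: F2n n}| * (c * c)); last by rewrite card_F2n; ring.
  rewrite -rsum_const; apply: eq_bigr => x _.
  have H := chi_sq a x.
  transitivity (c * c * (chi a x * chi a x)); [ring | rewrite H; ring].
have E2 : \big[Rplus/0]_(x : F2n n)
       (avg M (fun x0 => c * chi a x0) x * avg M (fun x0 => c * chi a x0) x) =
   c * c * \big[Rplus/0]_(x : F2n n) (avg M (chi a) x * avg M (chi a) x).
  rewrite rsum_mull; apply: eq_bigr => x _; rewrite avg_scal; ring.
rewrite E1 E2 in V; rewrite /W.
move: V; set S := bigop _ _ _; set Rr := bigop _ _ _ => V.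
rewrite (_ : c * c * (1 - S / Q) = (c * c * Q - c * c * S) * / Q); last by field; lra.
apply: Rmult_le_compat_r => //; apply: Rlt_le; apply: Rinv_0_lt_compat => //.
Qed.
End ErrBound.

Section Level1.
Variable n : nat.
Local Notation Q := (2 ^ n).
Implicit Types a x y : F2n n.

Definition Ch (t : R) := (exp t + exp (- t)) / 2.
Definition Sh (t : R) := (exp t - exp (- t)) / 2.

Lemma exp_chi t a y : exp (t * chi a y) = Ch t + chi a y * Sh t.
Proof. rewrite /Ch /Sh; case: (chi_pm a y) => ->; rewrite ?Rmult_1_r; [ |rewrite Ropp_mult_distr_r_reverse Rmult_1_r ]; lra. Qed.

Definition Fp (b : F2n n -> R) (Y : seq (F2n n)) y :=
  \big[Rmult/1]_(a <- Y) exp (b a * chi a y).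

Lemma prod_formula (b : F2n n -> R) (Y : seq (F2n n)) : free Y ->
  (forall c, c \notin span Y -> \big[Rplus/0]_(y : F2n n) (chi c y * Fp b Y y) = 0) /\
  \big[Rplus/0]_(y : F2n n) Fp b Y y = Q * \big[Rmult/1]_(a <- Y) Ch (b a).
Proof.
elim: Y => [|v Y IH].
  move=> _; split.
    move=> c; rewrite span_nil memv0 => nc.
    rewrite /Fp; under eq_bigr do rewrite big_nil Rmult_1_r.
    by rewrite chi_sum (negbTE nc).
  rewrite /Fp big_nil; under eq_bigr do rewrite big_nil.
  by rewrite rsum_const card_F2n.
rewrite free_cons => /andP [nv fY]; have [IH1 IH2] := IH fY.
have step : forall c, \big[Rplus/0]_(y : F2n n) (chi c y * Fp b (v :: Y) y) =
   Ch (b v) * \big[Rplus/0]_(y : F2n n) (chi c y * Fp b Y y) +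
   Sh (b v) * \big[Rplus/0]_(y : F2n n) (chi (GRing.add c v) y * Fp b Y y).
  move=> c; rewrite !rsum_mull -big_split /=; apply: eq_bigr => y _.
  rewrite /Fp big_cons exp_chi chiDl; ring.
have sY : (span Y <= span (v :: Y))%VS.
  by apply: sub_span => z zY; rewrite inE zY orbT.
have vY : v \in span (v :: Y) by apply: memv_span; rewrite inE eqxx.
split.
  move=> c nc; rewrite step IH1 ?IH1; first ring.
    apply: contra nc => H; rewrite -(GRing.addrK v c).
    by apply: memvB => //; apply: (subvP sY).
  by apply: contra nc => H; apply: (subvP sY).
have h0 : forall Z, \big[Rplus/0]_(y : F2n n) (chi GRing.zero y * Fp b Z y) =
    \big[Rplus/0]_(y : F2n n) Fp b Z y.
  by move=> Z; apply: eq_bigr => y _; rewrite chi0 Rmult_1_l.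
have := step GRing.zero.
rewrite !h0 GRing.add0r (IH1 v nv) IH2 big_cons => ->; ring.
Qed.

End Level1.

Lemma ln_le' x y : 0 < x -> x <= y -> ln x <= ln y.
Proof.
move=> xp; case/Rle_lt_or_eq_dec => [H|->]; last lra.
by apply: Rlt_le; apply: ln_increasing.
Qed.

Lemma ln_div' x y : 0 < x -> 0 < y -> ln (x / y) = ln x - ln y.
Proof.
move=> xp yp; have yi : 0 < / y by apply: Rinv_0_lt_compat.
rewrite /Rdiv ln_mult // ln_Rinv //; lra.
Qed.

Lemma ln_le_sub1 z : 0 < z -> ln z <= z - 1.
Proof.
move=> zp; rewrite -[X in _ <= X]ln_exp; apply: ln_le' => //.
have := exp_ineq1_le (z - 1); lra.
Qed.

Lemma jensen (T : finType) (P : pred T) (u : T -> R) : leq 1 #|P| ->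
  \big[Rplus/0]_(x | P x) u x / INR #|P| <=
  ln (\big[Rplus/0]_(x | P x) exp (u x) / INR #|P|).
Proof.
move=> cp; have c0 : 0 < INR #|P| by apply: lt_0_INR; apply/ltP.
set m := \big[Rplus/0]_(x | P x) exp (u x) / INR #|P|.
have mp : 0 < m.
  rewrite /m /Rdiv; apply: Rmult_lt_0_compat; last by apply: Rinv_0_lt_compat.
  case/card_gt0P: cp => x0 Px0; rewrite (bigD1 x0) //=.
  have := exp_pos (u x0); have : 0 <= \big[Rplus/0]_(i | P i && (i != x0)) exp (u i).
    by apply: rsum_ge0 => i _; apply: Rlt_le; apply: exp_pos.
  lra.
have pt : forall x, u x <= ln m + exp (u x) / m - 1.
  move=> x; have h := ln_le_sub1 (Rdiv_lt_0_compat _ _ (exp_pos (u x)) mp).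
  rewrite ln_div' ?ln_exp in h; [lra | apply: exp_pos | done].
have S : \big[Rplus/0]_(x | P x) u x <=
    \big[Rplus/0]_(x | P x) (ln m + exp (u x) / m - 1).
  by apply: rsum_le => x _; apply: pt.
rewrite rsum_sub big_split /= !rsum_const /Rdiv -rsum_mulr in S.
have E : \big[Rplus/0]_(i | P i) exp (u i) * / m = INR #|P|.
  rewrite /m; field; split; [lra|].
  move: mp; rewrite /m /Rdiv => mp H; rewrite H in mp; lra.
rewrite E in S.
apply: (Rmult_le_reg_r (INR #|P|)) => //.
rewrite /Rdiv Rmult_assoc Rinv_l; [|lra]; lra.
Qed.

Lemma rsum_sub_le (T : finType) (P : pred T) (F : T -> R) :
  (forall x, 0 <= F x) ->
  \big[Rplus/0]_(x | P x) F x <= \big[Rplus/0]_(x : T) F x.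
Proof.
move=> H; rewrite big_mkcond /=; apply: rsum_le => x _.
by case: (P x); [apply: Rle_refl | apply: H].
Qed.

Section Level1b.
Variable n : nat.
Local Notation Q := (2 ^ n).
Implicit Types a x y : F2n n.

Lemma exp_lsum (I : Type) (r : seq I) (F : I -> R) :
  exp (\big[Rplus/0]_(i <- r) F i) = \big[Rmult/1]_(i <- r) exp (F i).
Proof.
elim: r => [|i r IH]; first by rewrite !big_nil exp_0.
by rewrite !big_cons exp_plus IH.
Qed.

Lemma prod_Ch_le (I : Type) (r : seq I) (b : I -> R) :
  \big[Rmult/1]_(i <- r) Ch (b i) <= exp (\big[Rplus/0]_(i <- r) (b i * b i) / 2).
Proof.
elim: r => [|i r IH]; first by rewrite !big_nil /Rdiv Rmult_0_l exp_0; lra.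
rewrite !big_cons /Rdiv Rmult_plus_distr_r exp_plus.
have h1 : 0 <= Ch (b i) by rewrite /Ch; have := exp_pos (b i); have := exp_pos (- b i); lra.
have h2 : 0 <= \big[Rmult/1]_(j <- r) Ch (b j).
  elim: r {IH} => [|j r IHr]; first by rewrite big_nil; lra.
  rewrite big_cons; apply: Rmult_le_pos => //.
  by rewrite /Ch; have := exp_pos (b j); have := exp_pos (- b j); lra.
apply: Rmult_le_compat => //.
exact: CoshB.cosh_le.
Qed.

Lemma level1 (M : F2n n -> seq bool) x (Y : seq (F2n n)) : free Y ->
  \big[Rplus/0]_(a <- Y) (avg M (chi a) x * avg M (chi a) x) <=
  2 * ln (Q / INR (cnt M x)).
Proof.
move=> fY.
set b := fun a => avg M (chi a) x.
set c := INR (cnt M x).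
have cp : 0 < c := cnt_posR M x.
have QP := Q_pos n.
set Bs := \big[Rplus/0]_(a <- Y) (b a * b a).
set P := [pred y | M y == M x].
have cardP : #|P| = cnt M x by [].
set Lin := fun y => \big[Rplus/0]_(a <- Y) (b a * chi a y).
have E1 : \big[Rplus/0]_(y | P y) Lin y / INR #|P| = Bs.
  rewrite cardP /Lin exchange_big /= /Rdiv rsum_mulr; apply: eq_bigr => a _.
  by rewrite -rsum_mull /b /avg /= -/c /Rdiv Rmult_assoc.
have J := jensen Lin (cnt_pos M x : leq 1 #|P|).
rewrite E1 cardP -/c in J.
have E2 : forall y, exp (Lin y) = Fp b Y y by move=> y; rewrite /Lin exp_lsum.
have E3 : \big[Rplus/0]_(y | P y) exp (Lin y) <= Q * exp (Bs / 2).
  apply: Rle_trans (_ : \big[Rplus/0]_(y : F2n n) exp (Lin y) <= _).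
    by apply: rsum_sub_le => y; apply: Rlt_le; apply: exp_pos.
  under eq_bigr do rewrite E2.
  rewrite (proj2 (prod_formula b fY)).
  apply: Rmult_le_compat_l; [lra | apply: prod_Ch_le].
have J2 : Bs <= ln (Q * exp (Bs / 2) / c).
  apply: Rle_trans J _; apply: ln_le'.
    apply: Rdiv_lt_0_compat => //.
    rewrite (bigD1 x) /=; last by [].
    apply: Rplus_lt_le_0_compat; first by apply: exp_pos.
    by apply: rsum_ge0 => i _; apply: Rlt_le; apply: exp_pos.
  rewrite /Rdiv; apply: Rmult_le_compat_r => //.
  by apply: Rlt_le; apply: Rinv_0_lt_compat.
rewrite (_ : Q * exp (Bs / 2) / c = (Q / c) * exp (Bs / 2)) in J2; last by field; lra.
rewrite ln_mult ?ln_exp in J2; [lra | | apply: exp_pos].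
by apply: Rdiv_lt_0_compat.
Qed.
End Level1b.

Section Counting.
Variable T : finType.
Variable M : T -> seq bool.

Lemma list_ind_sum (U : seq (seq bool)) (m : seq bool) (c : R) :
  uniq U -> m \in U ->
  \big[Rplus/0]_(u <- U) (if m == u then c else 0) = c.
Proof.
elim: U => [|u U IH] //= /andP [nu uU]; rewrite inE big_cons.
case: eqP => [->|ne] /= mU.
  rewrite big1_seq; first lra.
  move=> w /andP [_ wU]; case: eqP => // E; by rewrite E wU in nu.
rewrite IH //; lra.
Qed.

Definition msgs := undup (map M (enum T)).

Lemma sum_inv_cnt :
  \big[Rplus/0]_(x : T) / INR (cnt M x) = INR (size msgs).
Proof.
have U := undup_uniq (map M (enum T)).
have inU : forall x, M x \in msgs.
  by move=> x; rewrite /msgs mem_undup; apply: map_f; rewrite mem_enum.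
transitivity (\big[Rplus/0]_(x : T) \big[Rplus/0]_(u <- msgs)
   (if M x == u then / INR (cnt M x) else 0)).
  by apply: eq_bigr => x _; rewrite list_ind_sum.
rewrite exchange_big /=.
transitivity (\big[Rplus/0]_(u <- msgs) 1).
  apply: eq_big_seq => u uin.
  have : u \in map M (enum T) by rewrite -mem_undup.
  case/mapP => x0 _ ->.
  rewrite -big_mkcond /=.
  transitivity (\big[Rplus/0]_(x | M x == M x0) / INR (cnt M x0)).
    apply: eq_bigr => x /eqP E; by rewrite (cnt_eq E).
  rewrite rsum_const (_ : #|_| = cnt M x0); last by apply: eq_card.
  have := cnt_posR M x0 => P; field; lra.
elim: msgs => [|u r IH]; first by rewrite big_nil.
rewrite big_cons IH /=; case: (size r) => [|k] /=; lra.
Qed.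

End Counting.

Section Encode.
Variable d : nat.

Definition encs (s : seq bool) : seq bool :=
  mkseq (fun i => nth false (rcons s true) i) d.+1.

Lemma size_encs s : size (encs s) == d.+1.
Proof. by rewrite size_mkseq. Qed.

Lemma encs_inj s t : leq (size s) d -> leq (size t) d -> encs s = encs t -> s = t.
Proof.
move=> hs ht E.
have Ei : forall i, leq i d -> nth false (rcons s true) i = nth false (rcons t true) i.
  move=> i hi; have := congr1 (fun u => nth false u i) E.
  by rewrite /encs !nth_mkseq.
have sz : size s = size t.
  case: (ltngtP (size s) (size t)) => // H.
  - have := Ei (size t) ht; rewrite !nth_rcons ltnn eqxx.
    by rewrite ltnNge (ltnW H) /= (gtn_eqF H).
  - have := Ei (size s) hs; rewrite !nth_rcons ltnn eqxx.
    by rewrite ltnNge (ltnW H) /= (gtn_eqF H).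
apply: (@eq_from_nth _ false) => // i hi.
have := Ei i (leq_trans (ltnW hi) hs); rewrite !nth_rcons hi -sz hi //.
Qed.

Lemma encs_nz s : leq (size s) d -> encs s != nseq d.+1 false.
Proof.
move=> hs; apply/eqP => E.
have := congr1 (fun u => nth false u (size s)) E.
by rewrite /encs nth_mkseq ?nth_nseq ?ltnS ?hs // nth_rcons ltnn eqxx.
Qed.

Definition enc s : d.+1.-tuple bool := Tuple (size_encs s).
Definition z0 : d.+1.-tuple bool := [tuple of nseq d.+1 false].

Lemma count_bound (U : seq (seq bool)) : uniq U ->
  (forall m, m \in U -> leq (size m) d) -> leq (size U).+1 (expn 2 d.+1).
Proof.
move=> uU hU.
have inj : {in U &, injective enc}.
  move=> s t sU tU E; apply: encs_inj; [exact: hU | exact: hU |].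
  by have := congr1 val E.
have uE : uniq (map enc U) by rewrite map_inj_in_uniq.
have sub : {subset map enc U <= enum (predC1 z0)}.
  move=> w /mapP [s sU ->]; rewrite mem_enum /= inE.
  apply/eqP => E; have := congr1 val E; apply/eqP; exact: encs_nz (hU s sU).
have := uniq_leq_size uE sub.
rewrite size_map -cardE cardC1 card_tuple card_bool.
have : leq 1 (expn 2 d.+1) by rewrite expn_gt0.
case: (expn 2 d.+1) => // k _ /=.
Qed.

End Encode.

Lemma free_sub (n : nat) (X : seq (F2n n)) :
  exists Y : seq (F2n n), {subset Y <= X} /\ free Y /\ span Y = span X.
Proof.
elim: X => [|v X [Y [sYX [fY eY]]]].
  by exists [::]; split => //; split => //; apply: nil_free.
case vX: (v \in span X).
  exists Y; split; first by move=> z /sYX zX; rewrite inE zX orbT.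
  split => //; rewrite span_cons eY; apply/esym/addv_idPr.
  by rewrite -memvE.
exists (v :: Y); split.
  by move=> z; rewrite !inE => /orP [->|/sYX ->]; rewrite ?orbT.
split; last by rewrite !span_cons eY.
by rewrite free_cons eY vX fY.
Qed.

Lemma exp_mul_pow (m : nat) (y : R) : exp (INR m * y) = exp y ^ m.
Proof.
elim: m => [|m IH]; first by rewrite /= Rmult_0_l exp_0.
rewrite S_INR Rmult_plus_distr_r Rmult_1_l exp_plus IH /=; ring.
Qed.

Lemma exp_ge_pow (m : nat) (y : R) : 0 <= 1 + y -> (1 + y) ^ m <= exp (INR m * y).
Proof.
move=> h; rewrite exp_mul_pow; apply: pow_incr; split => //.
exact: exp_ineq1_le.
Qed.

Lemma ln2_le : ln 2 <= 3 / 4.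
Proof.
rewrite -[X in _ <= X]ln_exp; apply: ln_le'; first lra.
have := @exp_ge_pow 10 (3/40) ltac:(lra).
rewrite (_ : INR 10 * (3/40) = 3/4); last by simpl; lra.
have : 2 <= (1 + 3/40) ^ 10 by simpl; lra.
lra.
Qed.

Lemma ln7_le : ln 7 <= 2.
Proof.
rewrite -[X in _ <= X]ln_exp; apply: ln_le'; first lra.
have := @exp_ge_pow 40 (1/20) ltac:(lra).
rewrite (_ : INR 40 * (1/20) = 2); last by simpl; lra.
have : 7 <= (1 + 1/20) ^ 40 by simpl; lra.
lra.
Qed.

Lemma ln3_le : ln 3 <= 10 / 9.
Proof.
rewrite -[X in _ <= X]ln_exp; apply: ln_le'; first lra.
have := @exp_ge_pow 100 (1/90) ltac:(lra).
rewrite (_ : INR 100 * (1/90) = 10/9); last by simpl; lra.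
have : 3 <= (1 + 1/90) ^ 100 by simpl; lra.
lra.
Qed.

Lemma INR_expn2 k : INR (expn 2 k) = 2 ^ k.
Proof. elim: k => [|k IH] //; rewrite expnS mult_INR IH /=; ring. Qed.

Lemma final_arith (d k : nat) (N del : R) :
  1 <= N -> N + 1 <= 2 ^ d.+1 -> 0 < del <= 1 / 2 ->
  INR k * del <= ln N * (1 + 2 * del) -> del / 2 * INR k <= INR d.
Proof.
move=> N1 N2 hd hk.
have L0 : 0 <= ln N by rewrite -ln_1; apply: ln_le'; lra.
have k0 := pos_INR k.
case: d N2 => [|[|d]] N2.
- have : ln N <= 0 by rewrite -ln_1; apply: ln_le'; simpl in N2; lra.
  simpl; nra.
- have : ln N <= 10 / 9.
    apply: Rle_trans ln3_le; apply: ln_le'; simpl in N2; lra.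
  move=> L3; simpl.
  case: (leqP k 4) => hk4.
    have : INR k <= INR 4 by apply: le_INR; apply/leP.
    rewrite (_ : INR 4 = 4); last by simpl; lra.
    nra.
  have : INR 5 <= INR k by apply: le_INR; apply/leP.
  rewrite (_ : INR 5 = 5); last by simpl; lra.
  move=> k5.
  have e1 : INR k * del <= 10/9 + 20/9 * del by nra.
  have e2 : del <= 2/5 by nra.
  nra.
- have Ld : ln N <= INR d.+2.
    case: d N2 => [|d] N2.
      apply: Rle_trans ln7_le; apply: ln_le'; simpl in N2 |- *; lra.
    apply: Rle_trans (_ : ln (2 ^ d.+4) <= _).
      by apply: ln_le'; lra.
    rewrite ln_pow; last lra.
    have := ln2_le; have := pos_INR d; rewrite !S_INR; nra.
  nra.
Qed.

Lemma ex_min (P : nat -> Prop) : (exists m, P m) ->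
  exists m, P m /\ (forall k, P k -> leq m k).
Proof.
move=> [m Pm].
elim: m {-2}m (leqnn m) Pm => [|N IH] m hm Pm.
  exists m; split => // k _; by move: hm; rewrite leqn0 => /eqP ->.
case: (Classical_Prop.classic (exists j, P j /\ leq j.+1 m)) => [[j [Pj jm]]|H].
  apply: (IH j) => //; rewrite -ltnS; exact: leq_trans jm hm.
exists m; split => // k Pk; rewrite leqNgt; apply/negP => km.
by apply: H; exists k.
Qed.

Lemma rsum_subpred (T : finType) (P P' : pred T) (F : T -> R) :
  (forall a, P a -> P' a) -> (forall a, 0 <= F a) ->
  \big[Rplus/0]_(a | P a) F a <= \big[Rplus/0]_(a | P' a) F a.
Proof.
move=> PP F0; rewrite big_mkcond [X in _ <= X]big_mkcond /=; apply: rsum_le => a _.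
case Pa: (P a); first by rewrite (PP a Pa); apply: Rle_refl.
by case: (P' a); [apply: F0 | apply: Rle_refl].
Qed.

Lemma rsum_le_seq (I : eqType) (r : seq I) (F G : I -> R) :
  (forall i, i \in r -> F i <= G i) ->
  \big[Rplus/0]_(i <- r) F i <= \big[Rplus/0]_(i <- r) G i.
Proof. by move=> H; rewrite big_seq [X in _ <= X]big_seq; apply: rsum_le. Qed.

Lemma rsum_const_seq (I : Type) (r : seq I) (c : R) :
  \big[Rplus/0]_(i <- r) c = INR (size r) * c.
Proof.
elim: r => [|i r IH]; first by rewrite big_nil /=; lra.
by rewrite big_cons IH /=; case: (size r) => [|k] /=; lra.
Qed.

Unset Implicit Arguments.
Set Strict Implicit.

Theorem mainTheorem2 (n : nat) (hn : leq 1 n) (f : F2n n -> R)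
    (eps delta : R) (heps : (0 < eps))
    (hdelta : (0 < delta /\ delta <= 1 / 2))
    (hxi : (0 < norm2sq f - eps * (1 + 2 * delta))) :
  exists (d k : nat),
    is_D1wayU f eps d /\
    is_approx_fdim f (norm2sq f - eps * (1 + 2 * delta)) k /\
    (delta / 2 * INR k <= INR d).
Proof.
case: hdelta => d0 d1.
have QP := Q_pos n.
set xi := norm2sq f - eps * (1 + 2 * delta).
have E0 : forall g : F2n n -> R, (forall x, g x = 0) -> Ex g = 0.
  by move=> g H; rewrite ExE big1 => [|x _]; [rewrite /Rdiv Rmult_0_l | apply: H].
pose Pd d := exists M B, cost M = d /\ proto_err f M B <= eps.
have exPd : exists d, Pd d.
  pose M0 := fun x : F2n n => nseq (enum_rank x) true.
  pose B0 := fun (s : seq bool) (y : F2n n) =>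
    f (GRing.add (nth GRing.zero (enum {: F2n n}) (size s)) y).
  exists (cost M0), M0, B0; split => //.
  rewrite /proto_err (_ : Ex _ = 0); first lra.
  apply: (E0) => x; apply: (E0) => y.
  by rewrite /B0 /M0 size_nseq nth_enum_rank /xorf Rminus_diag; simpl; ring.
have [d [[M [B [costM errM]]] mind]] := ex_min exPd.
have EB := err_bound f M B.
set sig := 2 * delta / (1 + 2 * delta).
have sigE : sig * (1 + 2 * delta) = 2 * delta by rewrite /sig; field; lra.
have sig0 : 0 < sig by rewrite /sig; apply: Rdiv_lt_0_compat; lra.
pose hb := fun a => if Rle_dec sig (W M a) then true else false.
pose Hl := [seq a <- enum {: F2n n} | hb a].
have [Y [sYH [fY eY]]] := free_sub Hl.
pose A := span Hl.
have W01 : forall a, 0 <= W M a <= 1.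
  have Qi : 0 < / 2 ^ n by apply: Rinv_0_lt_compat.
  move=> a; rewrite /W /Rdiv; split.
    apply: Rmult_le_pos; last lra.
    by apply: rsum_ge0 => x _; apply: Rle_0_sqr.
  apply: Rle_trans (_ : 2 ^ n * / 2 ^ n <= 1); last by rewrite Rinv_r; lra.
  apply: Rmult_le_compat_r; first lra.
  rewrite -(card_F2n n) -[X in _ <= X]Rmult_1_r -rsum_const; apply: rsum_le => x _.
  have := @avg_bound _ M (chi a) x (fun y => ltac:(case: (chi_pm a y) => ->; lra)).
  move=> h; nra.
set F := fun a => fhat f a * fhat f a.
have F0 : forall a, 0 <= F a by move=> a; apply: Rle_0_sqr.
have wA : xi <= fweight f A.
  have S1 : \big[Rplus/0]_(a | hb a) F a <= fweight f A.
    apply: rsum_subpred => // a ha; rewrite /A; apply: memv_span.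
    by rewrite mem_filter ha mem_enum.
  have S2 : norm2sq f = \big[Rplus/0]_(a | hb a) F a + \big[Rplus/0]_(a | ~~ hb a) F a.
    by rewrite /norm2sq -parseval (bigID hb).
  have S3 : \big[Rplus/0]_(a | ~~ hb a) F a <=
      (1 + 2 * delta) * \big[Rplus/0]_(a | ~~ hb a) (F a * (1 - W M a)).
    rewrite rsum_mull; apply: rsum_le => a; rewrite /hb.
    case: Rle_dec => // /Rnot_le_lt h _.
    have := F0 a; have := W01 a => hW hF.
    have key : 1 <= (1 + 2 * delta) * (1 - W M a) by nra.
    nra.
  have S4 : \big[Rplus/0]_(a | ~~ hb a) (F a * (1 - W M a)) <=
       \big[Rplus/0]_(a : F2n n) (F a * (1 - W M a)).
    apply: rsum_sub_le => a; have := F0 a; have := W01 a; nra.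
  have S5 : \big[Rplus/0]_(a : F2n n) (F a * (1 - W M a)) <= eps.
    by apply: Rle_trans errM; exact: EB.
  rewrite /xi; nra.
have dimA : \dim A = size Y by rewrite /A -eY; apply/eqP; exact: fY.
pose Pk k := exists A0 : {vspace F2n n}, \dim A0 = k /\ xi <= fweight f A0.
have [k [Pk_k mink]] : exists k, Pk k /\ (forall j, Pk j -> leq k j).
  by apply: ex_min; exists (\dim A), A.
have kY : leq k (size Y) by rewrite -dimA; apply: mink; exists A.
have lb : INR (size Y) * sig <= \big[Rplus/0]_(a <- Y) W M a.
  rewrite -rsum_const_seq; apply: rsum_le_seq => a /sYH.
  by rewrite mem_filter /hb; case: Rle_dec.
have ub : \big[Rplus/0]_(a <- Y) W M a <= 2 * ln (INR (size (msgs M))).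
  have st1 : \big[Rplus/0]_(a <- Y) W M a =
      \big[Rplus/0]_(x : F2n n) \big[Rplus/0]_(a <- Y)
          (avg M (chi a) x * avg M (chi a) x) / 2 ^ n.
    by rewrite /W /Rdiv -rsum_mulr exchange_big.
  have st2 : \big[Rplus/0]_(x : F2n n) \big[Rplus/0]_(a <- Y)
          (avg M (chi a) x * avg M (chi a) x) <=
      \big[Rplus/0]_(x : F2n n) (2 * ln (2 ^ n / INR (cnt M x))).
    by apply: rsum_le => x _; apply: level1.
  have J : \big[Rplus/0]_(x : F2n n) ln (2 ^ n / INR (cnt M x)) / 2 ^ n <=
      ln (\big[Rplus/0]_(x : F2n n) exp (ln (2 ^ n / INR (cnt M x))) / 2 ^ n).
    rewrite -(card_F2n n); apply: (jensen (P := predT)).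
    by apply/card_gt0P; exists GRing.zero.
  have st4 : \big[Rplus/0]_(x : F2n n) exp (ln (2 ^ n / INR (cnt M x))) / 2 ^ n =
      INR (size (msgs M)).
    rewrite -sum_inv_cnt /Rdiv rsum_mulr; apply: eq_bigr => x _.
    have cp := cnt_posR M x.
    rewrite exp_ln; first by field; lra.
    by apply: Rdiv_lt_0_compat.
  rewrite st4 in J; rewrite st1.
  have st5 : \big[Rplus/0]_(x : F2n n) (2 * ln (2 ^ n / INR (cnt M x))) =
      2 * \big[Rplus/0]_(x : F2n n) ln (2 ^ n / INR (cnt M x)) by rewrite rsum_mull.
  rewrite st5 in st2.
  move: st2 J; set S1 := bigop _ _ _; set S2 := bigop _ _ _ => st2 J.
  rewrite /Rdiv in J |- *.
  have Qi : 0 < / 2 ^ n by apply: Rinv_0_lt_compat.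
  nra.
have Nb : leq (size (msgs M)).+1 (expn 2 d.+1).
  apply: count_bound; first exact: undup_uniq.
  move=> m; rewrite mem_undup => /mapP [x _ ->]; rewrite -costM.
  rewrite /cost; exact: leq_bigmax.
have N1 : 1 <= INR (size (msgs M)).
  rewrite (_ : 1 = INR 1) //; apply: le_INR; apply/leP.
  rewrite lt0n; apply/nilP => E.
  have : M GRing.zero \in msgs M by rewrite mem_undup; apply: map_f; rewrite mem_enum.
  by rewrite E.
have N2 : INR (size (msgs M)) + 1 <= 2 ^ d.+1.
  rewrite -INR_expn2 -S_INR; apply: le_INR; apply/leP; exact: Nb.
have kd : INR k * delta <= ln (INR (size (msgs M))) * (1 + 2 * delta).
  have kY' : INR k <= INR (size Y) by apply: le_INR; apply/leP.
  have : INR k * sig <= 2 * ln (INR (size (msgs M))) by nra.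
  move=> h.
  have e : INR k * sig * (1 + 2 * delta) = INR k * (2 * delta) by rewrite Rmult_assoc sigE.
  have h2 := Rmult_le_compat_r (1 + 2 * delta) _ _ ltac:(lra) h.
  lra.
exists d, k; split; last split.
- split; first by exists M, B.
  by move=> M' B' e'; apply: mind; exists M', B'.
- split; first exact: Pk_k.
  by move=> A0 hA0; apply: mink; exists A0.
- exact: (final_arith N1 N2 (conj d0 d1) kd).
Qed.
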